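(* MPS is not sd-weakly-strategyproof on the domain of strict linear orders over bundles. Concretely, for $n=2$, $p=2$, $D_F=\{1_F,2_F\}$, $D_B=\{1_B,2_B\}$, with true preferences $1_F2_B\succ_1 1_F1_B\succ_1 2_F1_B\succ_1 2_F2_B$ and $1_F1_B\succ_2 2_F1_B\succ_2 2_F2_B\succ_2 1_F2_B$, if agent 1 reports $2_F1_B\succ'_1 1_F1_B\succ'_1 1_F2_B\succ'_1 2_F2_B$, then agent 1's MPS allocation under the misreport weakly stochastically dominates her truthful MPS allocation w.r.t. $\succ_1$ and differs from it.
   Context: Setting: agents $N=\{1,\dots,n\}$; types $D_i$ pairwise disjoint, $|D_i|=n$, unit supply; bundles $\mathcal D=\prod_i D_i$; strict linear orders $\succ_j$ on $\mathcal D$. An assignment is an $n\times|\mathcal D|$ matrix $(p_{j,x})$ with entries in $[0,1]$, rows summing to $1$, and $\sum_j\sum_{x\ni o}p_{j,x}=1$ for each item $o$. $U(\succ,x)=\{y:y\succ x\}\cup\{x\}$; $p$ weakly stochastically dominates $q$ w.r.t. $\succ$ if $\sum_{y\in U(\succ,x)}p_y\ge\sum_{y\in U(\succ,x)}q_y$ for all $x$. A mechanism $f$ is sd-weakly-strategyproof if for every profile $R$, agent $j$ and report $\succ'_j$, with $R'=(\succ'_j,\succ_{-j})$: if $f(R')_j$ weakly stochastically dominates $f(R)_j$ w.r.t. $\succ_j$ then $f(R')_j=f(R)_j$. MPS: items start with supply $1$; a bundle is available if all its items have positive remaining supply. Continuously in time each agent eats her (reported) most preferred available bundle at rate $1$ (each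 item of it consumed at rate $1$, $p_{j,x}$ growing at rate $1$); exhausted items make all bundles containing them unavailable; run until all items are exhausted. *)

(* Defs.v *)
From mathcomp Require Import all_boot all_order all_algebra.
Set Implicit Arguments. Unset Strict Implicit. Unset Printing Implicit Defensive.
Import Order.TTheory GRing.Theory Num.Theory.
Local Open Scope ring_scope.

Section MPS.
Variables n p : nat.

(* agents are 'I_n; types are 'I_p; each type has items 'I_n.
   An item is a pair (type, index); a bundle picks one item of each type. *)
Definition item := ('I_p * 'I_n)%type.
Definition bundle := {ffun 'I_p -> 'I_n}.
Definition contains (x : bundle) (o : item) : bool := x o.1 == o.2.

(* A preference is a list of bundles, most preferred first;
   it is a strict linear order over all bundles iff it is a permutation of them. *)
Definition pref := seq bundle.
Definition linear_order (r : pref) : bool := perm_eq r (enum {: bundle}).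
Definition prefers (r : pref) (x y : bundle) : bool := (index x r < index y r)%N.
Definition upper (r : pref) (x : bundle) : pred bundle :=
  fun y => (index y r <= index x r)%N.

Definition profile := {ffun 'I_n -> pref}.
Definition valid_profile (R : profile) : Prop := forall j, linear_order (R j).

Definition supply := {ffun item -> rat}.
Definition assignment := {ffun 'I_n -> {ffun bundle -> rat}}.

Definition available (s : supply) (x : bundle) : bool :=
  [forall t, 0 < s (t, x t)].

Definition top_available (R : profile) (s : supply) (j : 'I_n) : option bundle :=
  ohead [seq x <- R j | available s x].

(* One phase of the eating procedure: every agent eats her top available
   bundle at rate 1 until the first item is exhausted. *)
Definition mps_step (R : profile) (st : supply * assignment) : supply * assignment :=
  let: (s, a) := st in
  let c := top_available R s in
  if [forall j, c j != None] then
    let rate (o : item) : nat :=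
      #|[set j | if c j is Some x then contains x o else false]| in
    let dt : rat :=
      \big[Order.min/1]_(o : item | (0 < rate o)%N) (s o / (rate o)%:R) in
    ([ffun o => s o - (rate o)%:R * dt],
     [ffun j => [ffun x => a j x + (if c j == Some x then dt else 0)]])
  else st.

Definition mps_init : supply * assignment := ([ffun => 1], [ffun => [ffun => 0]]).

(* Each phase exhausts at least one of the n*p items, so n*p phases suffice
   to run the procedure until every item is exhausted. *)
Definition MPS (R : profile) : assignment := (iter (n * p) (mps_step R) mps_init).2.

Definition sd_weakly_dominates (r : pref) (pp q : {ffun bundle -> rat}) : Prop :=
  forall x, \sum_(y | upper r x y) q y <= \sum_(y | upper r x y) pp y.

Definition deviate (R : profile) (j : 'I_n) (r' : pref) : profile :=
  [ffun i => if i == j then r' else R i].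

Definition sd_weakly_strategyproof (f : profile -> assignment) : Prop :=
  forall (R : profile) (j : 'I_n) (r' : pref),
    valid_profile R -> linear_order r' ->
    sd_weakly_dominates (R j) (f (deviate R j r') j) (f R j) ->
    f (deviate R j r') j = f R j.

End MPS.

(* The concrete instance: n = 2 agents, p = 2 types F (= type 0) and B (= type 1);
   item "1" is index 0 and item "2" is index 1. *)
Definition i1 : 'I_2 := ord0.
Definition i2 : 'I_2 := ord_max.
Definition tF : 'I_2 := ord0.
Definition mkb (f b : 'I_2) : bundle 2 2 := [ffun t : 'I_2 => if t == tF then f else b].

Definition pref1_true : pref 2 2 := [:: mkb i1 i2; mkb i1 i1; mkb i2 i1; mkb i2 i2].
Definition pref2_true : pref 2 2 := [:: mkb i1 i1; mkb i2 i1; mkb i2 i2; mkb i1 i2].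
Definition pref1_report : pref 2 2 := [:: mkb i2 i1; mkb i1 i1; mkb i1 i2; mkb i2 i2].

(* agent 1 = ord0, agent 2 = ord_max *)
Definition R_true : profile 2 2 :=
  [ffun j : 'I_2 => if j == ord0 then pref1_true else pref2_true].

(* Main.v *)
Require Import Defs.
From mathcomp Require Import all_boot all_order all_algebra.
Import Order.TTheory GRing.Theory Num.Theory.
Local Open Scope ring_scope.
Lemma enum2 : enum 'I_2 = [:: i1; i2].
Proof. by apply: (inj_map val_inj); rewrite val_enum_ord. Qed.
Lemma enum_item : index_enum (item 2 2) = [:: (i1,i1);(i1,i2);(i2,i1);(i2,i2)].
Proof.
rewrite [index_enum _]unlock [@Finite.enum in LHS]unlock /=.
rewrite /prod_enum. rewrite enum2. by []. Qed.
Lemma ord2P (j : 'I_2) : j = i1 \/ j = i2.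
Proof. by case: j => [[|[|m]] //= H]; [left|right]; apply: val_inj. Qed.
Lemma forall2 (P : pred 'I_2) : [forall t, P t] = P i1 && P i2.
Proof.
apply/forallP/andP => [H|[H1 H2] t]; first by split; apply H.
by case: (ord2P t) => ->.
Qed.
Lemma card2 (P : pred 'I_2) : #|[set j | P j]| = (P i1 + P i2)%N.
Proof.
rewrite -sum1_card big_mkcond !big_ord_recl big_ord0 !inE /=.
have -> : lift ord0 (ord0 : 'I_1) = i2 by apply: val_inj.
by case: (P i1); case: (P i2).
Qed.
Lemma mkbE f b t : mkb f b t = if t == tF then f else b.
Proof. by rewrite ffunE. Qed.
Lemma eq_mkb a b c d : (mkb a b == mkb c d) = (a == c) && (b == d).
Proof.
apply/eqP/andP => [H|[/eqP-> /eqP->]//]; split; apply/eqP.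
  by have := congr1 (fun x : bundle 2 2 => x tF) H; rewrite !ffunE.
by have := congr1 (fun x : bundle 2 2 => x i2) H; rewrite !ffunE.
Qed.
Lemma ffun2E (x : bundle 2 2) : x = mkb (x tF) (x i2).
Proof. by apply/ffunP => t; rewrite ffunE; case: (ord2P t) => ->. Qed.
Lemma availE (S : supply 2 2) f b :
  available S (mkb f b) = (0 < S (tF, f)) && (0 < S (i2, b)).
Proof. by rewrite /available forall2 !ffunE. Qed.
Lemma eqSome (a b : bundle 2 2) : (Some a == Some b) = (a == b).
Proof. by []. Qed.
Definition gS (a b c d : rat) : supply 2 2 :=
  [ffun o : item 2 2 => if o.1 == tF then (if o.2 == i1 then a else b)
                        else (if o.2 == i1 then c else d)].
Definition gA (f : nat -> nat -> nat -> rat) : assignment 2 2 :=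
  [ffun j : 'I_2 => [ffun x : bundle 2 2 => f (val j) (val (x tF)) (val (x i2))]].

Ltac unf := try unfold gS; try unfold gA.
Ltac topav := rewrite /top_available; try unfold deviate; rewrite !ffunE /= ?ffunE /= !availE; unf;
  rewrite !ffunE /=; by vm_compute.
Ltac stepT T1 T2 :=
  rewrite /mps_step forall2 T1 T2 /=; unf; congr pair;
  [ apply/ffunP; intros o; rewrite !ffunE; destruct o as [t i]; case: (ord2P t) => ->; case: (ord2P i) => ->;
    rewrite enum_item !big_cons big_nil /= !card2 T1 T2 /contains /= !ffunE /=; by apply/eqP; vm_compute
  | apply/ffunP; intros j; apply/ffunP; intros x; rewrite !ffunE; rewrite (ffun2E x);
    case: (ord2P (x tF)) => ->; case: (ord2P (x i2)) => ->; case: (ord2P j) => ->;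
    rewrite ?T1 ?T2 ?eqSome ?eq_mkb /= ?enum_item ?big_cons ?big_nil /= ?card2 ?T1 ?T2 /contains /= !ffunE /=;
    by apply/eqP; vm_compute ].

Definition fT1 (j a b : nat) : rat :=
  match j, a, b with 0, 0, 1 => 1/2 | 1, 0, 0 => 1/2 | _, _, _ => 0 end.
Definition fT2 (j a b : nat) : rat :=
  match j, a, b with 0, 0, 1 => 1/2 | 0, 1, 0 => 1/4 | 1, 0, 0 => 1/2 | 1, 1, 0 => 1/4 | _, _, _ => 0 end.
Definition fT3 (j a b : nat) : rat :=
  match j, a, b with 0, 0, 1 => 1/2 | 0, 1, 0 => 1/4 | 0, 1, 1 => 1/4
   | 1, 0, 0 => 1/2 | 1, 1, 0 => 1/4 | 1, 1, 1 => 1/4 | _, _, _ => 0 end.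
Definition fM1 (j a b : nat) : rat :=
  match j, a, b with 0, 1, 0 => 1/2 | 1, 0, 0 => 1/2 | _, _, _ => 0 end.
Definition fM2 (j a b : nat) : rat :=
  match j, a, b with 0, 1, 0 => 1/2 | 0, 0, 1 => 1/2 | 1, 0, 0 => 1/2 | 1, 1, 1 => 1/2 | _, _, _ => 0 end.

Lemma stepT1 : mps_step R_true (@mps_init 2 2) = (gS 0 1 (1/2) (1/2), gA fT1).
Proof.
rewrite /mps_init.
have T1 : top_available R_true [ffun=> 1] i1 = Some (mkb i1 i2) by topav.
have T2 : top_available R_true [ffun=> 1] i2 = Some (mkb i1 i1) by topav.
stepT T1 T2.
Qed.

Lemma stepT2 : mps_step R_true (gS 0 1 (1/2) (1/2), gA fT1) = (gS 0 (1/2) 0 (1/2), gA fT2).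
Proof.
have T1 : top_available R_true (gS 0 1 (1/2) (1/2)) i1 = Some (mkb i2 i1) by topav.
have T2 : top_available R_true (gS 0 1 (1/2) (1/2)) i2 = Some (mkb i2 i1) by topav.
stepT T1 T2.
Qed.
Lemma stepT3 : mps_step R_true (gS 0 (1/2) 0 (1/2), gA fT2) = (gS 0 0 0 0, gA fT3).
Proof.
have T1 : top_available R_true (gS 0 (1/2) 0 (1/2)) i1 = Some (mkb i2 i2) by topav.
have T2 : top_available R_true (gS 0 (1/2) 0 (1/2)) i2 = Some (mkb i2 i2) by topav.
stepT T1 T2.
Qed.
Lemma stop (R : profile 2 2) A : top_available R (gS 0 0 0 0) i1 = None ->
  mps_step R (gS 0 0 0 0, A) = (gS 0 0 0 0, A).
Proof. by move=> T; rewrite /mps_step forall2 T. Qed.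
Lemma stopT : top_available R_true (gS 0 0 0 0) i1 = None.
Proof. topav. Qed.
Lemma stopM : top_available (deviate R_true ord0 pref1_report) (gS 0 0 0 0) i1 = None.
Proof. topav. Qed.
Lemma MPS_T : MPS R_true = gA fT3.
Proof.
rewrite /MPS !iterS stepT1 stepT2 stepT3 stop //; exact: stopT.
Qed.
Lemma stepM1 : mps_step (deviate R_true ord0 pref1_report) (@mps_init 2 2) = (gS (1/2) (1/2) 0 1, gA fM1).
Proof.
rewrite /mps_init.
have T1 : top_available (deviate R_true ord0 pref1_report) [ffun=> 1] i1 = Some (mkb i2 i1) by topav.
have T2 : top_available (deviate R_true ord0 pref1_report) [ffun=> 1] i2 = Some (mkb i1 i1) by topav.
stepT T1 T2.
Qed.
Lemma stepM2 : mps_step (deviate R_true ord0 pref1_report) (gS (1/2) (1/2) 0 1, gA fM1) = (gS 0 0 0 0, gA fM2).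
Proof.
have T1 : top_available (deviate R_true ord0 pref1_report) (gS (1/2) (1/2) 0 1) i1 = Some (mkb i1 i2) by topav.
have T2 : top_available (deviate R_true ord0 pref1_report) (gS (1/2) (1/2) 0 1) i2 = Some (mkb i2 i2) by topav.
stepT T1 T2.
Qed.
Lemma MPS_M : MPS (deviate R_true ord0 pref1_report) = gA fM2.
Proof.
rewrite /MPS !iterS stepM1 stepM2 !stop //; exact: stopM.
Qed.
Lemma linE (r : pref 2 2) : uniq r -> (forall f b, mkb f b \in r) -> linear_order r.
Proof.
move=> Ur Mr; apply: uniq_perm => //; first exact: enum_uniq.
by move=> x; rewrite mem_enum (ffun2E x) Mr.
Qed.
Ltac linT := apply: linE; [ rewrite /= !inE !eq_mkb; by [] |
   intros f b; case: (ord2P f) => ->; case: (ord2P b) => ->; rewrite !inE !eq_mkb; by [] ].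
Lemma lin1 : linear_order pref1_true. Proof. linT. Qed.
Lemma lin2 : linear_order pref2_true. Proof. linT. Qed.
Lemma lin3 : linear_order pref1_report. Proof. linT. Qed.
Lemma sumb (P : pred (bundle 2 2)) (F : bundle 2 2 -> rat) :
  \sum_(y | P y) F y =
  (if P (mkb i1 i1) then F (mkb i1 i1) else 0) + ((if P (mkb i1 i2) then F (mkb i1 i2) else 0) +
  ((if P (mkb i2 i1) then F (mkb i2 i1) else 0) + ((if P (mkb i2 i2) then F (mkb i2 i2) else 0) + 0))).
Proof.
rewrite big_mkcond (reindex (fun p : item 2 2 => mkb p.1 p.2)) /=.
  by rewrite enum_item !big_cons big_nil.
exists (fun x : bundle 2 2 => (x tF, x i2)) => [[a b] _ | y _] /=.
  by rewrite !ffunE.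
by rewrite -ffun2E.
Qed.
Lemma dom : sd_weakly_dominates pref1_true (gA fM2 ord0) (gA fT3 ord0).
Proof.
move=> x; rewrite !sumb (ffun2E x);
case: (ord2P (x tF)) => ->; case: (ord2P (x i2)) => ->;
rewrite /upper /= !eq_mkb /= !ffunE /=; by vm_compute.
Qed.
Lemma diff : gA fM2 ord0 <> gA fT3 ord0.
Proof.
move=> H; have := congr1 (fun f : {ffun bundle 2 2 -> rat} => f (mkb i2 i1)) H.
rewrite !ffunE /= => /eqP; by vm_compute.
Qed.
Lemma valid : valid_profile R_true.
Proof. by move=> j; case: (ord2P j) => ->; rewrite ffunE /=; [exact: lin1 | exact: lin2]. Qed.

Theorem mainTheorem16 :
  [/\ valid_profile R_true, linear_order pref1_report,
      sd_weakly_dominates pref1_true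
        (MPS (deviate R_true ord0 pref1_report) ord0) (MPS R_true ord0),
      MPS (deviate R_true ord0 pref1_report) ord0 <> MPS R_true ord0
    & ~ sd_weakly_strategyproof (@MPS 2 2)].
Proof.
rewrite MPS_T MPS_M; split.
- exact: valid.
- exact: lin3.
- exact: dom.
- exact: diff.
move=> H; apply: diff; rewrite -MPS_T -MPS_M; apply: H.
- exact: valid.
- exact: lin3.
have -> : R_true ord0 = pref1_true by rewrite ffunE.
by rewrite MPS_T MPS_M; exact: dom.
Qed.
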